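(* Assume (H1). For every integer $h\ge1$, $N_1(\mathcal{M}^{(h)})$ and $N_2(\mathcal{M}^{(h)})$ have the same law, and there exist $c_1>0,c_2>0$ such that for all $h$, $$\mathbb{P}(\mathcal{M}^{(h)}\notin J_h)\le c_1\exp(-c_2h^{1/3}).$$
   Context: (H1): $\mu=(\mu_k)_{k\ge0}$ probability on $\mathbb{N}$ with $\mu_0+\mu_1\ne1$, $\sum_kk\mu_k=1$, $\sum_{k\le K}\mu_k=1$ for some integer $K>0$; $\sigma_\mu^2$ is its variance. $I_K=\{(k,j):1\le j\le k\le K\}$; $\mathcal{M}^{(h)}$ is multinomial with parameters $h$ and $(p_{k,j})_{(k,j)\in I_K}$, $p_{k,j}=\mu_k$. $\mathbb{N}^I[h]=\{c\in\mathbb{N}^{I_K}:\sum c_i=h\}$. For $\mathbf{a}\in\mathbb{R}^{I_K}$, $N_1(\mathbf{a})=\sum(j-1)\mathbf{a}_{k,j}$, $N_2(\mathbf{a})=\sum(k-j)\mathbf{a}_{k,j}$. $J_h=\{\mathbf{a}\in\mathbb{N}^I[h]:(N_1(\mathbf{a}),N_2(\mathbf{a}))\in[\tfrac{\sigma_\mu^2}{2}h-h^{2/3},\tfrac{\sigma_\mu^2}{2}h+h^{2/3}]^2\}$. *)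

(* Defs.v *)
From HB Require Import structures.
From mathcomp Require Import all_boot all_order all_algebra.
From mathcomp Require Import all_classical all_reals all_analysis.
Set Implicit Arguments. Unset Strict Implicit. Unset Printing Implicit Defensive.
Import Order.TTheory GRing.Theory Num.Theory.
Local Open Scope ring_scope.

Definition IK (K : nat) : Type :=
  {p : 'I_K.+1 * 'I_K.+1 | (0 < p.2)%N && (p.2 <= p.1)%N}.

Definition pK (R : realType) (K : nat) (mu : nat -> R) (i : IK K) : R :=
  mu (val i).1.

Definition N1 (K : nat) (a : IK K -> nat) : nat :=
  (\sum_(i : IK K) ((val i).2 - 1) * a i)%N.
Definition N2 (K : nat) (a : IK K -> nat) : nat :=
  (\sum_(i : IK K) ((val i).1 - (val i).2) * a i)%N.

Definition multinom_pmf (R : realType) (K h : nat) (p : IK K -> R)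
    (c : IK K -> nat) : R :=
  if (\sum_(i : IK K) c i)%N == h then
    (h`!)%:R / (\prod_(i : IK K) (c i)`!)%:R * \prod_(i : IK K) p i ^+ c i
  else 0.

(* P(M^(h) \in A) for M^(h) multinomial(h, p).  Every point of N^I[h] has
   all coordinates <= h, so summing over {ffun IK K -> 'I_h.+1} covers the
   whole support exactly once. *)
Definition multinom_prob (R : realType) (K h : nat) (p : IK K -> R)
    (A : (IK K -> nat) -> bool) : R :=
  \sum_(c : {ffun IK K -> 'I_h.+1})
     (if A (fun i => nat_of_ord (c i)) then
        multinom_pmf h p (fun i => nat_of_ord (c i)) else 0).

(* variance of mu (supported on {0..K}, mean 1) *)
Definition sigma2 (R : realType) (K : nat) (mu : nat -> R) : R :=
  \sum_(k < K.+1) (k%:R - 1) ^+ 2 * mu k.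

(* a \in J_h (the condition sum a = h is automatic on the multinomial support,
   but we include it for faithfulness) *)
Definition inJ (R : realType) (K h : nat) (s2 : R) (a : IK K -> nat) : bool :=
  let lo := s2 / 2 * h%:R - powR h%:R (2 / 3) in
  let hi := s2 / 2 * h%:R + powR h%:R (2 / 3) in
  [&& (\sum_(i : IK K) a i)%N == h,
      lo <= (N1 a)%:R, (N1 a)%:R <= hi,
      lo <= (N2 a)%:R & (N2 a)%:R <= hi].

(* Main.v *)
Require Import Defs.
From HB Require Import structures.
From mathcomp Require Import all_boot all_order all_algebra.
From mathcomp Require Import all_classical all_reals all_analysis.
Import Order.TTheory GRing.Theory Num.Theory.
Local Open Scope ring_scope.
From mathcomp Require Import ring lra zify.

Set Implicit Arguments. Unset Strict Implicit.

Section Multinom.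
Variables (I : finType) (R : realType) (y : I -> R).

Definition mterm h (c : I -> nat) : R :=
  h`!%:R / (\prod_i (c i)`!)%:R * \prod_i y i ^+ c i.

Definition Asum m h := \sum_(c : {ffun I -> 'I_m.+1} | (\sum_i (c i : nat) == h)%N)
   mterm h (fun i => c i).

Lemma fact_neq0 (n : nat) : (n`!)%:R != 0 :> R.
Proof. by rewrite pnatr_eq0 -lt0n fact_gt0. Qed.

Lemma prod_fact_neq0 (c : I -> nat) : (\prod_i (c i)`!)%:R != 0 :> R.
Proof. by rewrite pnatr_eq0 -lt0n prodn_gt0 // => i; rewrite fact_gt0. Qed.

Lemma val_inord m n : (nat_of_ord (@inord m n)) = if (n < m.+1)%N then n else 0%N.
Proof. by rewrite /inord val_insubd. Qed.

Definition addi m (i : I) (c : {ffun I -> 'I_m.+1}) : {ffun I -> 'I_m.+1} :=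
  [ffun j => if j == i then inord (c j).+1 else c j].
Definition subi m (i : I) (c : {ffun I -> 'I_m.+1}) : {ffun I -> 'I_m.+1} :=
  [ffun j => if j == i then inord (c j).-1 else c j].

Lemma le_sum_one (c : I -> nat) i : (c i <= \sum_j c j)%N.
Proof. by rewrite (bigD1 i) //= leq_addr. Qed.

Lemma mterm_S h (c : I -> nat) : (\sum_i c i)%N = h.+1 ->
  mterm h.+1 c = \sum_i (c i)%:R * mterm h c.
Proof.
move=> Hs; rewrite -mulr_suml -natr_sum Hs /mterm factS natrM.
by rewrite !mulrA.
Qed.

Lemma addiE m i (c : {ffun I -> 'I_m.+1}) (j : I) : (c i < m)%N ->
  (addi i c j : nat) = (c j + nat_of_bool (j == i))%N.
Proof.
move=> H; rewrite /addi ffunE; case: eqP => [->|_]; last by rewrite addn0.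
by rewrite val_inord ltnS H addn1.
Qed.

Lemma sum_addi m i (c : {ffun I -> 'I_m.+1}) : (c i < m)%N ->
  (\sum_j (addi i c j : nat))%N = (\sum_j (c j : nat)).+1.
Proof.
move=> H; under eq_bigr do rewrite addiE //.
rewrite big_split /=.
have -> : (\sum_(j : I) nat_of_bool (j == i))%N = 1%N.
  by rewrite (bigD1 i) //= eqxx big1 // => j /negbTE ->.
by rewrite addn1.
Qed.

Lemma mterm_addi m h i (c : {ffun I -> 'I_m.+1}) : (c i < m)%N ->
  (addi i c i : nat)%:R * mterm h (fun j => addi i c j) = mterm h (fun j => c j) * y i.
Proof.
move=> H; rewrite /mterm /=.
have Dn (F : I -> nat) : (\prod_j F j = F i * \prod_(j | j != i) F j)%N.
  by rewrite (bigD1 i).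
have Dr (F : I -> R) : \prod_j F j = F i * \prod_(j | j != i) F j.
  by rewrite (bigD1 i).
rewrite (Dn (fun j => (addi i c j : nat)`!)) (Dn (fun j => (c j : nat)`!)).
rewrite (Dr (fun j => y j ^+ (addi i c j : nat))) (Dr (fun j => y j ^+ (c j : nat))).
rewrite !addiE // eqxx addn1.
have E1 : (\prod_(j | j != i) ((addi i c j : nat))`! = \prod_(j | j != i) ((c j : nat))`!)%N.
  by apply: eq_bigr => j /negbTE Hj; rewrite addiE // Hj addn0.
have E2 : \prod_(j | j != i) y j ^+ (addi i c j : nat) = \prod_(j | j != i) y j ^+ (c j : nat).
  by apply: eq_bigr => j /negbTE Hj; rewrite addiE // Hj addn0.
rewrite E1 E2 factS !natrM exprS.
have h1 := fact_neq0 (c i).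
have h2 : (\prod_(j | j != i) (c j : nat)`!)%:R != 0 :> R.
  by rewrite pnatr_eq0 -lt0n prodn_gt0 // => j; rewrite fact_gt0.
have h3 : ((c i : nat).+1)%:R != 0 :> R by rewrite pnatr_eq0.
field. by rewrite addrC natr1 h3 h1 h2.
Qed.

Lemma Asum_eq m h : (h <= m)%N -> Asum m h = (\sum_i y i) ^+ h.
Proof.
elim: h => [_|h IH Hhm].
  rewrite /Asum (bigD1 [ffun => ord0]) /=; last first.
    by rewrite big1 // => i _; rewrite ffunE.
  rewrite [X in _ + X]big1 ?addr0.
    rewrite /mterm /= big1 ?mulr1 ?divr1 ?expr0; last by move=> i _; rewrite ffunE.
    by rewrite big1 ?divr1 ?mulr1 // => i _; rewrite ffunE.
  move=> c /andP [Hs Hne]; exfalso; move/negP: Hne; apply.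
  apply/eqP/ffunP => i; rewrite ffunE; apply/val_inj => /=.
  move: Hs; rewrite sum_nat_eq0 => /forallP /(_ i) /eqP; done.
have Hm : (h < m)%N by [].
rewrite /Asum.
rewrite (eq_bigr (fun c : {ffun I -> 'I_m.+1} => \sum_i (c i : nat)%:R * mterm h (fun j => c j)));
  last by move=> c /eqP Hs; rewrite mterm_S.
rewrite exchange_big /= exprSr mulr_sumr.
apply: eq_bigr => i _.
rewrite (bigID (fun c : {ffun I -> 'I_m.+1} => (0 < c i)%N)) /=.
rewrite [X in _ + X]big1 ?addr0; last first.
  by move=> c /andP [_]; rewrite lt0n negbK => /eqP ->; rewrite mul0r.
rewrite (reindex_onto (addi i) (subi i)) /=; last first.
  move=> c /andP [_ Hc]; apply/ffunP => j; rewrite !ffunE.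
  case: eqP => [->|//]; apply/val_inj => /=.
  have E : (nat_of_ord (@inord m (c i).-1)) = (c i).-1.
    apply: inordK. have := ltn_ord (c i). lia.
  by rewrite val_inord E prednK // ltn_ord.
rewrite -IH; last exact: ltnW.
rewrite /Asum mulr_suml.
apply: eq_big => c.
  case: (ltnP (c i) m) => Hci.
    rewrite sum_addi // eqSS addiE // eqxx addn1 /= andbT.
    case: (_ == h) => //=; apply/eqP/ffunP => j; rewrite !ffunE.
    case: eqP => [->|//]; apply/val_inj => /=.
    have E : nat_of_ord (@inord m (c i).+1) = (c i).+1 by apply: inordK.
    by rewrite val_inord E /= ltn_ord.
  have -> : (addi i c i : nat) = 0%N.
    by rewrite /addi ffunE eqxx val_inord ltnS ltnNge Hci.
  rewrite ltnn andbF /=; apply/esym/negbTE; apply/eqP => Hs.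
  have := le_sum_one (fun j => (c j : nat)) i; rewrite Hs => H1.
  by have := leq_trans Hci H1; rewrite leqNgt Hm.
move=> /andP [/andP [_ Hpos] _].
have Hci : (c i < m)%N.
  rewrite ltnNge; apply/negP => Hci.
  move: Hpos; rewrite /addi ffunE eqxx val_inord ltnS leqNgt.
  by have -> : (c i < m)%N = false by apply/negbTE; rewrite -leqNgt.
rewrite mterm_addi //.
Qed.

End Multinom.

Section Flip.
Variable K : nat.

Definition flipp (i : IK K) : 'I_K.+1 * 'I_K.+1 :=
  ((val i).1, inord ((val i).1.+1 - (val i).2)).

Lemma flipp2 (i : IK K) : ((flipp i).2 : nat) = ((val i).1.+1 - (val i).2)%N.
Proof. rewrite /flipp /= inordK //; have := ltn_ord (val i).1; have := valP i; move=> /andP [H1 H2] H3; simpl in *; lia. Qed.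

Lemma flip_proof (i : IK K) : (0 < (flipp i).2)%N && ((flipp i).2 <= (flipp i).1)%N.
Proof.
have := valP i; move=> /andP [H1 H2].
rewrite flipp2 /flipp /=; apply/andP; split; simpl in *; lia.
Qed.

Definition flip (i : IK K) : IK K := exist _ (flipp i) (flip_proof i).

Lemma flip1 (i : IK K) : (val (flip i)).1 = (val i).1.
Proof. by []. Qed.

Lemma flip2 (i : IK K) : ((val (flip i)).2 : nat) = ((val i).1.+1 - (val i).2)%N.
Proof. exact: flipp2. Qed.

Lemma flipK : involutive flip.
Proof.
move=> i; apply/val_inj.
have := valP i; move=> /andP [H1 H2].
have A1 := flip1 (flip i); have A2 := flip1 i; have B1 := flip2 (flip i); have B2 := flip2 i.
move: A1 A2 B1 B2 H1 H2.
case: (val (flip (flip i))) => [a b]; case: (val (flip i)) => [a1 b1]; case: (val i) => [a0 b0] /=.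
move=> A1 A2 B1 B2 H1 H2; rewrite A1 A2; congr pair; apply/val_inj => /=; subst; lia.
Qed.
End Flip.

Lemma flip_inj K : injective (@flip K).
Proof. exact: inv_inj (@flipK K). Qed.

Section Part1.
Variables (R : realType) (K : nat) (mu : nat -> R).

Lemma N1flip (a : IK K -> nat) : N1 (fun i => a (flip i)) = N2 a.
Proof.
rewrite /N1 /N2 (reindex_inj (@flip_inj K)) /=.
apply: eq_bigr => i _; rewrite flipK flip2.
have := valP i; move=> /andP [H1 H2]; simpl in *.
congr (_ * _)%N; lia.
Qed.

Lemma pmf_flip h (a : IK K -> nat) :
  multinom_pmf h (pK mu) (fun i => a (flip i)) = multinom_pmf h (pK mu) a.
Proof.
rewrite /multinom_pmf.
have E0 : (\sum_i a (flip i) = \sum_i a i)%N.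
  by rewrite (reindex_inj (@flip_inj K)) /=; apply: eq_bigr => i _; rewrite flipK.
have E1 : (\prod_i (a (flip i))`! = \prod_i (a i)`!)%N.
  by rewrite (reindex_inj (@flip_inj K)) /=; apply: eq_bigr => i _; rewrite flipK.
have E2 : \prod_i pK mu i ^+ a (flip i) = \prod_i pK mu i ^+ a i.
  by rewrite (reindex_inj (@flip_inj K)) /=; apply: eq_bigr => i _; rewrite flipK.
by rewrite E0 E1 E2.
Qed.

Lemma part1 h n :
  multinom_prob h (pK mu) (fun a => @N1 K a == n) = multinom_prob h (pK mu) (fun a => @N2 K a == n).
Proof.
rewrite /multinom_prob.
have inj : injective (fun c : {ffun IK K -> 'I_h.+1} => [ffun i => c (flip i)]).
  move=> c1 c2 /ffunP E; apply/ffunP => i; have := E (flip i); rewrite !ffunE flipK //.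
rewrite (reindex_inj inj) /=.
apply: eq_bigr => c _.
have -> : (fun i => nat_of_ord ([ffun i0 => c (flip i0)] i)) = (fun i => nat_of_ord (c (flip i))).
  by apply: boolp.funext => i; rewrite ffunE.
by rewrite (N1flip (fun i => nat_of_ord (c i))) (pmf_flip h (fun i => nat_of_ord (c i))).
Qed.
End Part1.

Section Sums.
Variables (R : realType) (K : nat).

Lemma sumIK (F : nat -> nat -> R) :
  \sum_(i : IK K) F (val i).1 (val i).2 = \sum_(k < K.+1) \sum_(j < k) F k j.+1.
Proof.
have -> : \sum_(i : IK K) F (val i).1 (val i).2 =
    \sum_(p : 'I_K.+1 * 'I_K.+1 | (0 < p.2)%N && (p.2 <= p.1)%N) F p.1 p.2.
  rewrite [RHS](reindex_omap (val : IK K -> _) insub) /=; last by move=> p Pp; rewrite insubT.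
  by apply: eq_bigl => j; rewrite (valP j) valK eqxx.
have -> : \sum_(p : 'I_K.+1 * 'I_K.+1 | (0 < p.2)%N && (p.2 <= p.1)%N) F p.1 p.2 =
   \sum_(k < K.+1) \sum_(j < K.+1 | (0 < j)%N && (j <= k)%N) F k j.
  by rewrite pair_big_dep; apply: eq_bigl.
apply: eq_bigr => k _.
rewrite big_mkcond big_ord_recl /= add0r.
rewrite (big_ord_widen_cond K (fun j => true) (fun j => F k j.+1)); last first.
  by have := ltn_ord k.
rewrite [RHS]big_mkcond /=; apply: eq_bigr => j _.
by rewrite /bump /= add1n.
Qed.

Lemma sum_tri (n : nat) : 2 * \sum_(j < n) (j%:R : R) = n%:R * (n%:R - 1).
Proof.
elim: n => [|n IH]; first by rewrite big_ord0 mulr0 mul0r.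
rewrite big_ord_recr /= mulrDr IH -natr1; ring.
Qed.
End Sums.

Lemma expR_quad (R : realType) (x : R) : x <= 1/2 -> expR x <= 1 + x + 2 * x ^+ 2.
Proof.
move=> hx.
have h1 := expR_ge1Dx (- x).
have h2 := expRxMexpNx_1 x.
have h3 := expR_ge0 x.
have h4 : 0 <= x ^+ 2 * (1 - 2 * x) by apply: mulr_ge0; [exact: sqr_ge0| lra].
set E := expR x in h2 h3 *; set F := expR (- x) in h1 h2.
have h5 : E * (1 - x) <= 1.
  rewrite -h2; apply: ler_wpM2l => //; lra.
nra.
Qed.

Section Tail.
Variables (R : realType) (K : nat) (p : IK K -> R) (w : IK K -> nat).
Hypothesis p_ge0 : forall i, 0 <= p i.
Hypothesis p_sum : \sum_i p i = 1.
Hypothesis w_le : forall i, (w i <= K)%N.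

Definition mw := \sum_i p i * (w i)%:R.

Lemma mw_ge0 : 0 <= mw.
Proof. by apply: sumr_ge0 => i _; apply: mulr_ge0. Qed.

Lemma mw_le : mw <= K%:R.
Proof.
have -> : K%:R = \sum_i p i * K%:R :> R by rewrite -mulr_suml p_sum mul1r.
apply: ler_sum => i _; apply: ler_wpM2l => //; rewrite ler_nat.
exact: w_le.
Qed.

Lemma mgf h (g : IK K -> R) :
  \sum_(c : {ffun IK K -> 'I_h.+1}) multinom_pmf h p (fun i => c i) * expR (\sum_i g i * (c i)%:R)
  = (\sum_i p i * expR (g i)) ^+ h.
Proof.
rewrite -(@Asum_eq _ _ (fun i => p i * expR (g i)) h h (leqnn h)).
rewrite /Asum [RHS]big_mkcond; apply: eq_bigr => c _.
rewrite /multinom_pmf; case: ifP => _; last by rewrite mul0r.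
rewrite /mterm -(mulrA (_ / _)); congr (_ * _).
rewrite expR_sum -big_split /=; apply: eq_bigr => i _.
by rewrite expRM_natr exprMn.
Qed.

Lemma tail_one h t : (t * K%:R) ^+ 2 <= 1/4 ->
  \sum_(c : {ffun IK K -> 'I_h.+1}) multinom_pmf h p (fun i => c i) *
     expR (t * ((\sum_i w i * c i)%N%:R - h%:R * mw))
  <= expR (h%:R * (2 * (t * K%:R) ^+ 2)).
Proof.
move=> Ht.
have -> : \sum_(c : {ffun IK K -> 'I_h.+1}) multinom_pmf h p (fun i => c i) *
     expR (t * ((\sum_i w i * c i)%N%:R - h%:R * mw)) =
   \sum_(c : {ffun IK K -> 'I_h.+1}) multinom_pmf h p (fun i => c i) *
     expR (\sum_i (t * ((w i)%:R - mw)) * (c i)%:R).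
  apply: eq_bigr => c _; rewrite /multinom_pmf; case: ifP => [/eqP Hs|_]; last by rewrite !mul0r.
  congr (_ * expR _); have Hs2 : h%:R = \sum_i (c i : nat)%:R :> R by rewrite -natr_sum Hs.
  rewrite Hs2 natr_sum mulr_suml -sumrB mulr_sumr.
  by apply: eq_bigr => i _; rewrite natrM; ring.
rewrite mgf expRM_natl.
have mw0 := mw_ge0; have mwK := mw_le.
have Hphi : \sum_i p i * expR (t * ((w i)%:R - mw)) <= 1 + 2 * (t * K%:R) ^+ 2.
  apply: le_trans (_ : \sum_i p i * (1 + t * ((w i)%:R - mw) + 2 * (t * K%:R) ^+ 2) <= _).
    apply: ler_sum => i _; apply: ler_wpM2l => //.
    have hw : (w i)%:R <= K%:R :> R by rewrite ler_nat.
    have hw0 : 0 <= (w i)%:R :> R by [].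
    have hsq : (t * ((w i)%:R - mw)) ^+ 2 <= (t * K%:R) ^+ 2.
      rewrite !exprMn; apply: ler_wpM2l; first exact: sqr_ge0.
      nra.
    apply: le_trans (expR_quad _) _; first nra.
    lra.
  rewrite le_eqVlt; apply/orP; left; apply/eqP.
  under eq_bigr do rewrite !mulrDr.
  rewrite !big_split /= -!mulr_suml p_sum.
  have -> : \sum_i p i * (t * (w i)%:R) = t * mw.
    by rewrite /mw mulr_sumr; apply: eq_bigr => i _; ring.
  ring.
apply: lerXn2r.
- by rewrite nnegrE; apply: sumr_ge0 => i _; apply: mulr_ge0 => //; apply: expR_ge0.
- by rewrite nnegrE expR_ge0.
- apply: le_trans Hphi _; exact: expR_ge1Dx.
Qed.
End Tail.

Section Means.
Variables (R : realType) (K : nat) (mu : nat -> R).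
Hypothesis Hmu_sum : \sum_(k < K.+1) mu k = 1.
Hypothesis Hmu_mean : \sum_(k < K.+1) k%:R * mu k = 1.

Definition w1 (i : IK K) : nat := ((val i).2 - 1)%N.
Definition w2 (i : IK K) : nat := ((val i).1 - (val i).2)%N.

Lemma psum : \sum_i @pK R K mu i = 1.
Proof.
rewrite /pK; transitivity (\sum_(k < K.+1) \sum_(j < k) mu k).
  exact: (@sumIK R K (fun k _ => mu k)).
rewrite -Hmu_mean; apply: eq_bigr => k _; by rewrite sumr_const card_ord mulr_natl.
Qed.

Lemma mean1 : mw (pK mu) w1 = sigma2 K mu / 2.
Proof.
rewrite /mw /pK /w1; transitivity (\sum_(k < K.+1) \sum_(j < k) mu k * (j.+1 - 1)%N%:R).
  exact: (@sumIK R K (fun k j => mu k * (j - 1)%N%:R)).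
have HS : forall k : nat, \sum_(j < k) (j.+1 - 1)%N%:R = k%:R * (k%:R - 1) / 2 :> R.
  move=> k; rewrite -sum_tri; under eq_bigr do rewrite subSS subn0.
  by field.
have -> : \sum_(k < K.+1) \sum_(j < k) mu k * (j.+1 - 1)%N%:R =
   \sum_(k < K.+1) ((k%:R - 1) ^+ 2 * mu k / 2 + (k%:R * mu k - mu k) / 2).
  apply: eq_bigr => k _; rewrite -mulr_sumr HS; by field.
rewrite big_split /= -!mulr_suml sumrB Hmu_mean Hmu_sum subrr mul0r addr0.
by [].
Qed.

Lemma mean2 : mw (pK mu) w2 = mw (pK mu) w1.
Proof.
rewrite /mw (reindex_inj (@flip_inj K)) /=; apply: eq_bigr => i _.
congr (_ * _%:R); rewrite /w1 /w2 flip2.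
have := valP i; move=> /andP [H1 H2]; simpl in *; lia.
Qed.

Lemma w1_le i : (w1 i <= K)%N.
Proof. rewrite /w1; have := ltn_ord (val i).2; lia. Qed.
Lemma w2_le i : (w2 i <= K)%N.
Proof. rewrite /w2; have := ltn_ord (val i).1; lia. Qed.
End Means.

Lemma pmf_ge0 (R : realType) K h (p : IK K -> R) c : (forall i, 0 <= p i) ->
  0 <= multinom_pmf h p c.
Proof.
move=> hp; rewrite /multinom_pmf; case: ifP => // _.
apply: mulr_ge0; first by apply: divr_ge0.
by apply: prodr_ge0 => i _; apply: exprn_ge0.
Qed.

Unset Implicit Arguments. Set Strict Implicit.

Theorem lemma9 (R : realType) (K : nat) (mu : nat -> R)
  (HK : (0 < K)%N)
  (Hmu_ge0 : forall k, 0 <= mu k)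
  (Hmu_supp : forall k, (K < k)%N -> mu k = 0)
  (Hmu_sum : \sum_(k < K.+1) mu k = 1)
  (Hmu_mean : \sum_(k < K.+1) k%:R * mu k = 1)
  (Hmu01 : mu 0%N + mu 1%N != 1) :
  (forall h : nat, (1 <= h)%N -> forall n : nat,
     @multinom_prob R K h (pK mu) (fun a => @N1 K a == n)
     = @multinom_prob R K h (pK mu) (fun a => @N2 K a == n)) /\
  (exists c1 c2 : R, 0 < c1 /\ 0 < c2 /\
     forall h : nat, (1 <= h)%N ->
       @multinom_prob R K h (pK mu) (fun a => ~~ @inJ R K h (sigma2 K mu) a)
       <= c1 * expR (- (c2 * powR h%:R (1 / 3)))).
Proof.
split; first by move=> h _ n; exact: part1.
have Kpos : 0 < K%:R :> R by rewrite ltr0n.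
exists 4, (1 / (8 * K%:R ^+ 2)); split; first by [].
split; first by apply: divr_gt0 => //; apply: mulr_gt0 => //; apply: exprn_gt0.
move=> h h1.
have hp : forall i, 0 <= @pK R K mu i by move=> i; exact: Hmu_ge0.
have ps := psum Hmu_mean.
have m1E := mean1 Hmu_sum Hmu_mean.
have m2E := @mean2 R K mu.
set s := sigma2 K mu in m1E *.
set m1 := mw (pK mu) (@w1 K) in m1E m2E.
set m2 := mw (pK mu) (@w2 K) in m2E.
have hR : 1 <= h%:R :> R by rewrite ler1n.
set u := powR h%:R (1 / 3).
have u1 : 1 <= u.
  have : powR h%:R 0 <= u by apply: ler_powR => //; lra.
  by rewrite powRr0.
have uE2 : powR h%:R (2 / 3) = u ^+ 2.
  have -> : (2 / 3 : R) = 1 / 3 * 2%:R by field.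
  by rewrite powRrM powR_mulrn // powR_ge0.
have uE3 : h%:R = u ^+ 3 :> R.
  rewrite -powR_mulrn ?powR_ge0 // /u -powRrM.
  have -> : (1 / 3 * 3%:R : R) = 1 by field.
  by rewrite powRr1 // ler0n.

set t := 1 / (4 * K%:R ^+ 2 * u).
have tpos : 0 < t.
  by apply: divr_gt0 => //; apply: mulr_gt0; [apply: mulr_gt0 => //; apply: exprn_gt0 | lra].
have Ht : (t * K%:R) ^+ 2 <= 1 / 4.
  have e : (t * K%:R) * (4 * (K%:R * u)) = 1 by rewrite /t; field; lra.
  have hK1 : 1 <= K%:R :> R by rewrite ler1n.
  have Ku : 1 <= K%:R * u by nra.
  have v0 : 0 <= t * K%:R by apply: mulr_ge0; lra.
  move: e Ku v0; set v := t * K%:R; set z := K%:R * u => e Ku v0.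
  have : v <= 1 / 4 by nra.
  nra.

have T1 := @tail_one R K (pK mu) (@w1 K) hp ps (@w1_le K) h t Ht.
have Htn : ((- t) * K%:R) ^+ 2 <= 1 / 4 by rewrite mulNr sqrrN.
have T2 := @tail_one R K (pK mu) (@w1 K) hp ps (@w1_le K) h (- t) Htn.
have T3 := @tail_one R K (pK mu) (@w2 K) hp ps (@w2_le K) h t Ht.
have T4 := @tail_one R K (pK mu) (@w2 K) hp ps (@w2_le K) h (- t) Htn.
rewrite -/m1 in T1 T2; rewrite -/m2 in T3 T4; rewrite mulNr sqrrN in T2 T4.
set B := expR (h%:R * (2 * (t * K%:R) ^+ 2)) in T1 T2 T3 T4.
set e0 := expR (- (t * u ^+ 2)).
set P := fun c : {ffun IK K -> 'I_h.+1} => multinom_pmf h (pK mu) (fun i => nat_of_ord (c i)).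
set A := fun (w : IK K -> nat) (m tt : R) (c : {ffun IK K -> 'I_h.+1}) =>
   expR (tt * ((\sum_i w i * c i)%N%:R - h%:R * m)).
have Pge0 : forall c, 0 <= P c by move=> c; apply: pmf_ge0.
have Age0 : forall w m tt c, 0 <= A w m tt c by move=> *; apply: expR_ge0.
apply: le_trans (_ : _ <= \sum_(c : {ffun IK K -> 'I_h.+1})
   e0 * (P c * (A (@w1 K) m1 t c + A (@w1 K) m1 (- t) c + A (@w2 K) m2 t c + A (@w2 K) m2 (- t) c))) _.
  rewrite /multinom_prob; apply: ler_sum => c _.
  have e0ge : 0 <= e0 by apply: expR_ge0.
  case: ifP => HJ; last first.
    apply: mulr_ge0 => //; apply: mulr_ge0 => //.
    by apply: addr_ge0; [apply: addr_ge0; [apply: addr_ge0|]|].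
  case Hs: ((\sum_i (c i : nat))%N == h); last first.
    rewrite /multinom_pmf Hs; by apply: mulr_ge0 => //; apply: mulr_ge0 => //; apply: addr_ge0; [apply: addr_ge0; [apply: addr_ge0|]|].
  suff H1 : 1 <= e0 * (A (@w1 K) m1 t c + A (@w1 K) m1 (- t) c + A (@w2 K) m2 t c + A (@w2 K) m2 (- t) c).
    rewrite mulrCA; rewrite -[X in X <= _]mulr1.
    by apply: ler_wpM2l => //; apply: Pge0.
  have G : forall y : R, 0 <= y -> 1 <= expR y.
    by move=> y hy; apply: le_trans _ (expR_ge1Dx y); lra.
  have X1 := Age0 (@w1 K) m1 t c; have X2 := Age0 (@w1 K) m1 (- t) c.
  have X3 := Age0 (@w2 K) m2 t c; have X4 := Age0 (@w2 K) m2 (- t) c.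
  have Y1 := mulr_ge0 e0ge X1; have Y2 := mulr_ge0 e0ge X2.
  have Y3 := mulr_ge0 e0ge X3; have Y4 := mulr_ge0 e0ge X4.
  rewrite !mulrDr.
  move: HJ; rewrite /inJ Hs uE2 /= -/s.
  rewrite /N1 /N2.
  set x1 := (\sum_i _)%N; set x2 := (\sum_i _)%N.
  have E1 : e0 * A (@w1 K) m1 t c = expR (-(t * u ^+ 2) + t * (x1%:R - h%:R * m1)) by rewrite /A /e0 -expRD.
  have E2 : e0 * A (@w1 K) m1 (- t) c = expR (-(t * u ^+ 2) + (- t) * (x1%:R - h%:R * m1)) by rewrite /A /e0 -expRD.
  have E3 : e0 * A (@w2 K) m2 t c = expR (-(t * u ^+ 2) + t * (x2%:R - h%:R * m2)) by rewrite /A /e0 -expRD.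
  have E4 : e0 * A (@w2 K) m2 (- t) c = expR (-(t * u ^+ 2) + (- t) * (x2%:R - h%:R * m2)) by rewrite /A /e0 -expRD.
  rewrite E1 E2 E3 E4 in Y1 Y2 Y3 Y4 *.
  have tge : 0 <= t by lra.
  rewrite m2E m1E.
  rewrite m2E m1E in Y1 Y2 Y3 Y4.
  rewrite !negb_and -!ltNge => /orP [H|/orP [H|/orP [H|H]]].
  - have W : 0 <= -(t * u ^+ 2) + (- t) * (x1%:R - h%:R * (s / 2)).
      have -> : -(t * u ^+ 2) + (- t) * (x1%:R - h%:R * (s / 2)) = t * (h%:R * (s / 2) - x1%:R - u ^+ 2) by ring.
      by apply: mulr_ge0 => //; clear - H; lra.
    have HG := G _ W; clear - HG Y1 Y2 Y3 Y4; lra.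
  - have W : 0 <= -(t * u ^+ 2) + t * (x1%:R - h%:R * (s / 2)).
      have -> : -(t * u ^+ 2) + t * (x1%:R - h%:R * (s / 2)) = t * (x1%:R - h%:R * (s / 2) - u ^+ 2) by ring.
      by apply: mulr_ge0 => //; clear - H; lra.
    have HG := G _ W; clear - HG Y1 Y2 Y3 Y4; lra.
  - have W : 0 <= -(t * u ^+ 2) + (- t) * (x2%:R - h%:R * (s / 2)).
      have -> : -(t * u ^+ 2) + (- t) * (x2%:R - h%:R * (s / 2)) = t * (h%:R * (s / 2) - x2%:R - u ^+ 2) by ring.
      by apply: mulr_ge0 => //; clear - H; lra.
    have HG := G _ W; clear - HG Y1 Y2 Y3 Y4; lra.
  - have W : 0 <= -(t * u ^+ 2) + t * (x2%:R - h%:R * (s / 2)).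
      have -> : -(t * u ^+ 2) + t * (x2%:R - h%:R * (s / 2)) = t * (x2%:R - h%:R * (s / 2) - u ^+ 2) by ring.
      by apply: mulr_ge0 => //; clear - H; lra.
    have HG := G _ W; clear - HG Y1 Y2 Y3 Y4; lra.
have T1' : \sum_(c : {ffun IK K -> 'I_h.+1}) P c * A (@w1 K) m1 t c <= B := T1.
have T2' : \sum_(c : {ffun IK K -> 'I_h.+1}) P c * A (@w1 K) m1 (- t) c <= B := T2.
have T3' : \sum_(c : {ffun IK K -> 'I_h.+1}) P c * A (@w2 K) m2 t c <= B := T3.
have T4' : \sum_(c : {ffun IK K -> 'I_h.+1}) P c * A (@w2 K) m2 (- t) c <= B := T4.
rewrite -mulr_sumr.
under eq_bigr do rewrite !mulrDr.
rewrite !big_split /=.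
have e0ge : 0 <= e0 by apply: expR_ge0.
apply: le_trans (_ : e0 * (4 * B) <= _).
  apply: ler_wpM2l => //; clear - T1' T2' T3' T4'; lra.
rewrite /e0 /B mulrCA -expRD; apply: ler_wpM2l => //; rewrite ler_expR.
rewrite le_eqVlt; apply/orP; left; apply/eqP.
rewrite uE3 /t; field.
by rewrite (gt_eqF Kpos); apply/negP => /eqP u0; move: u1; rewrite u0; lra.
Qed.
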